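(* Let $\mathcal K\subset\mathbb R^d$ be compact and convex and let $f:\mathcal K\to\mathbb R$ be a proper convex function whose subgradients satisfy $\|\nabla f(x)\|_\ast\le G$ for all $x\in\mathcal K$. Run UniXGrad (defined in the context) with deterministic oracle, i.e. $g_t=\nabla f(\bar x_t)$ and $M_t=\nabla f(\tilde z_t)$ (subgradients). Then \[ f(\bar x_T)-\min_{x\in\mathcal K}f(x)\le \frac{7D\sqrt{1+\sum_{t=1}^T\alpha_t^2\|g_t-M_t\|_\ast^2}-D}{T^2}\le \frac{6D}{T^2}+\frac{14GD}{\sqrt T}. \]
   Context: Let $\|\cdot\|$ be a norm on $\mathbb R^d$ with dual norm $\|\cdot\|_\ast$. Let $\mathcal R:\mathcal K\to\mathbb R$ be differentiable and $1$-strongly convex w.r.t. $\|\cdot\|$, with Bregman divergence $D_{\mathcal R}(x,y)=\mathcal R(x)-\mathcal R(y)-\langle\nabla\mathcal R(y),x-y\rangle$, and let $D>0$ satisfy $D^2=\sup_{x,y\in\mathcal K}D_{\mathcal R}(x,y)$. UniXGrad: fix $T$, $y_0\in\mathcal K$, weights $\alpha_t=t$, $A_t=\sum_{i=1}^t\alpha_i$. For $t=1,\dots,T$: set $\tilde z_t=\frac{1}{A_t}\big(\alpha_t y_{t-1}+\sum_{i=1}^{t-1}\alpha_i x_i\big)$, obtain $M_t$ from the oracle at $\tilde z_t$, and with learning rate $\eta_t=\frac{2D}{\sqrt{1+\sum_{i=1}^{t-1}\alpha_i^2\|g_i-M_i\|_\ast^2}}$ compute $x_t=\arg\min_{x\in\mathcal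 K}\alpha_t\langle x,M_t\rangle+\frac1{\eta_t}D_{\mathcal R}(x,y_{t-1})$; then set $\bar x_t=\frac1{A_t}\sum_{i=1}^t\alpha_i x_i$, obtain $g_t$ from the oracle at $\bar x_t$, and compute $y_t=\arg\min_{y\in\mathcal K}\alpha_t\langle y,g_t\rangle+\frac1{\eta_t}D_{\mathcal R}(y,y_{t-1})$. Output $\bar x_T$. *)

(* Defs.v *)
From Stdlib Require Import Reals.
From mathcomp Require Import all_boot.
Set Implicit Arguments. Unset Strict Implicit. Unset Printing Implicit Defensive.

Open Scope R_scope.

Definition vec (d : nat) := 'I_d -> R.

Definition inner (d : nat) (x y : vec d) : R := \big[Rplus/0]_(i < d) (x i * y i).
Definition vadd (d : nat) (x y : vec d) : vec d := fun i => x i + y i.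
Definition vsub (d : nat) (x y : vec d) : vec d := fun i => x i - y i.
Definition vscal (d : nat) (a : R) (x : vec d) : vec d := fun i => a * x i.
Definition comb (d : nat) (t : R) (x y : vec d) : vec d := vadd (vscal t x) (vscal (1 - t) y).

Definition is_norm (d : nat) (N : vec d -> R) : Prop :=
  (forall x, 0 <= N x) /\
  (forall x, N x = 0 -> forall i, x i = 0) /\
  (forall a x, N (vscal a x) = Rabs a * N x) /\
  (forall x y, N (vadd x y) <= N x + N y).

Definition is_dual_norm (d : nat) (N Nst : vec d -> R) : Prop :=
  forall g, is_lub (fun r => exists x, N x <= 1 /\ r = inner g x) (Nst g).

Definition convex_set (d : nat) (K : vec d -> Prop) : Prop :=
  forall x y t, K x -> K y -> 0 <= t <= 1 -> K (comb t x y).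

(* compactness in R^d (Heine-Borel): closed and bounded, for the standard
   (coordinatewise) topology, which all norms on R^d induce *)
Definition closed_set (d : nat) (K : vec d -> Prop) : Prop :=
  forall (u : nat -> vec d) (p : vec d),
    (forall n, K (u n)) -> (forall i, Un_cv (fun n => u n i) (p i)) -> K p.
Definition bounded_set (d : nat) (K : vec d -> Prop) : Prop :=
  exists B, forall x, K x -> forall i, Rabs (x i) <= B.
Definition compact_set (d : nat) (K : vec d -> Prop) : Prop :=
  closed_set K /\ bounded_set K.

Definition convex_on (d : nat) (K : vec d -> Prop) (f : vec d -> R) : Prop :=
  forall x y t, K x -> K y -> 0 <= t <= 1 -> f (comb t x y) <= t * f x + (1 - t) * f y.

Definition is_subgradient (d : nat) (K : vec d -> Prop) (f : vec d -> R) (x g : vec d) : Prop :=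
  forall y, K y -> f x + inner g (vsub y x) <= f y.

Definition differentiable_on (d : nat) (N : vec d -> R) (K : vec d -> Prop)
  (Rg : vec d -> R) (gR : vec d -> vec d) : Prop :=
  forall y, K y -> forall eps, 0 < eps -> exists delta, 0 < delta /\
    forall x, K x -> N (vsub x y) < delta ->
      Rabs (Rg x - Rg y - inner (gR y) (vsub x y)) <= eps * N (vsub x y).

Definition strongly_convex_on (d : nat) (N : vec d -> R) (K : vec d -> Prop) (Rg : vec d -> R) : Prop :=
  forall x y t, K x -> K y -> 0 <= t <= 1 ->
    Rg (comb t x y) <= t * Rg x + (1 - t) * Rg y - t * (1 - t) / 2 * (N (vsub x y)) ^ 2.

Definition bregman (d : nat) (Rg : vec d -> R) (gR : vec d -> vec d) (x y : vec d) : R :=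
  Rg x - Rg y - inner (gR y) (vsub x y).

Definition is_bregman_diameter (d : nat) (K : vec d -> Prop) (Rg : vec d -> R)
  (gR : vec d -> vec d) (D : R) : Prop :=
  0 < D /\ is_lub (fun r => exists x y, K x /\ K y /\ r = bregman Rg gR x y) (D ^ 2).

Fixpoint sum1 (F : nat -> R) (n : nat) : R :=
  match n with O => 0 | S m => sum1 F m + F (S m) end.

Definition alpha (t : nat) : R := INR t.
Definition A (t : nat) : R := sum1 alpha t.

Definition is_minimizer (d : nat) (K : vec d -> Prop) (phi : vec d -> R) (x : vec d) : Prop :=
  K x /\ forall u, K u -> phi x <= phi u.

Definition unixgrad_run (d : nat) (Nst : vec d -> R) (K : vec d -> Prop)
  (Rg : vec d -> R) (gR : vec d -> vec d) (D : R) (oracle : vec d -> vec d)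
  (T : nat) (y0 : vec d) (x y ztil xbar M g : nat -> vec d) (eta : nat -> R) : Prop :=
  y 0%nat = y0 /\
  forall t : nat, (1 <= t <= T)%N ->
    ztil t = (fun k => / A t * (alpha t * y (t - 1)%N k
                                 + sum1 (fun i => alpha i * x i k) (t - 1)%N)) /\
    M t = oracle (ztil t) /\
    eta t = 2 * D / sqrt (1 + sum1 (fun i => alpha i ^ 2 * (Nst (vsub (g i) (M i))) ^ 2) (t - 1)%N) /\
    is_minimizer K (fun u => alpha t * inner u (M t) + / eta t * bregman Rg gR u (y (t - 1)%N)) (x t) /\
    xbar t = (fun k => / A t * sum1 (fun i => alpha i * x i k) t) /\
    g t = oracle (xbar t) /\
    is_minimizer K (fun u => alpha t * inner u (g t) + / eta t * bregman Rg gR u (y (t - 1)%N)) (y t).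

(* Main.v *)
Require Import Defs.
From Stdlib Require Import Reals Lra Psatz FunctionalExtensionality.
From mathcomp Require Import all_boot.
From mathcomp Require Import zify.
Open Scope R_scope.
Set Implicit Arguments. Unset Strict Implicit.

Lemma big_lin n (F G : 'I_n -> R) a b :
  \big[Rplus/0]_(i<n) (a*F i + b*G i) = a * \big[Rplus/0]_(i<n) F i + b * \big[Rplus/0]_(i<n) G i.
Proof.
elim: n F G => [|n IH] F G; first by rewrite !big_ord0; ring.
rewrite !big_ord_recl /= IH.
move: (\big[Rplus/0]_(i<n) F (lift ord0 i)) (\big[Rplus/0]_(i<n) G (lift ord0 i)) => X Y; ring.
Qed.

Lemma inner_ext d (x x' y y' : vec d) : (forall i, x i = x' i) -> (forall i, y i = y' i) ->
  inner x y = inner x' y'.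
Proof. move=> Hx Hy; rewrite /inner; apply: eq_bigr => i _; by rewrite Hx Hy. Qed.

Lemma inner_comm d (x y : vec d) : inner x y = inner y x.
Proof. rewrite /inner; apply: eq_bigr => i _; ring. Qed.

Lemma inner_lin d a b (x y z : vec d) :
  inner (fun i => a * x i + b * y i) z = a * inner x z + b * inner y z.
Proof. rewrite /inner -big_lin; apply: eq_bigr => i _ /=; ring. Qed.

Lemma inner_linr d a b (x y z : vec d) :
  inner z (fun i => a * x i + b * y i) = a * inner z x + b * inner z y.
Proof. rewrite inner_comm inner_lin (inner_comm x) (inner_comm y) //. Qed.

Lemma t1 (t T : nat) : (1 <= t <= T)%N -> (1 <= t)%coq_nat.
Proof. move=> H. lia. Qed.

Lemma inner_scal_r d a (x z : vec d) : inner z (vscal a x) = a * inner z x.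
Proof.
rewrite -(Rplus_0_r (a * inner z x)) -(Rmult_0_l (inner z x)) -inner_linr.
apply: inner_ext => i //; rewrite /vscal; ring.
Qed.

Lemma inner_sub_r d (x y z : vec d) : inner z (vsub x y) = inner z x - inner z y.
Proof.
have -> : inner z x - inner z y = 1 * inner z x + (-1) * inner z y by ring.
rewrite -inner_linr; apply: inner_ext => i //; rewrite /vsub; ring.
Qed.

Lemma inner_sub_l d (x y z : vec d) : inner (vsub x y) z = inner x z - inner y z.
Proof. by rewrite inner_comm inner_sub_r !(inner_comm z). Qed.

Lemma inner_zero_r d (z x : vec d) : (forall i, x i = 0) -> inner z x = 0.
Proof.
move=> H; rewrite -(Rmult_0_l (inner z x)) -inner_scal_r; apply: inner_ext => i //.
by rewrite /vscal H; ring.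
Qed.

Lemma inner3r d a b c (u v w z : vec d) :
  inner z (fun i => a*u i + b*v i + c*w i) = a * inner z u + b * inner z v + c * inner z w.
Proof.
have -> : a * inner z u + b * inner z v + c * inner z w =
  1 * (a * inner z u + b * inner z v) + c * inner z w by ring.
rewrite -(inner_linr a b u v) -inner_linr.
apply: inner_ext => i //; ring.
Qed.

Lemma inner_comb_l d s (v x z : vec d) : inner (comb s v x) z = s * inner v z + (1 - s) * inner x z.
Proof. rewrite -inner_lin; apply: inner_ext => i //. Qed.

Section Norm.
Variables (d : nat) (N Nst : vec d -> R).
Hypothesis HN : is_norm N.

Lemma N_ext (x y : vec d) : (forall i, x i = y i) -> N x = N y.
Proof. move=> H; f_equal; apply: functional_extensionality; exact: H. Qed.

Lemma N_ge0 x : 0 <= N x.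
Proof. case: HN => H _; exact: H. Qed.

Lemma N_scal a x : N (vscal a x) = Rabs a * N x.
Proof. case: HN => _ [_ [H _]]; exact: H. Qed.

Lemma N_zero_vec (x : vec d) : N x = 0 -> forall i, x i = 0.
Proof. case: HN => _ [H _]; exact: H. Qed.

Lemma N_sym x y : N (vsub x y) = N (vsub y x).
Proof.
rewrite (@N_ext (vsub y x) (vscal (-1) (vsub x y))); last by move=> i; rewrite /vscal /vsub; ring.
rewrite N_scal Rabs_Ropp Rabs_R1; ring.
Qed.

Lemma N_comb_sub s v x : 0 <= s -> N (vsub (comb s v x) x) = s * N (vsub v x).
Proof.
move=> Hs; rewrite (@N_ext _ (vscal s (vsub v x))); last by move=> i; rewrite /comb /vadd /vscal /vsub; ring.
by rewrite N_scal Rabs_pos_eq.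
Qed.

Hypothesis HD : is_dual_norm N Nst.

Lemma Nst_ge0 g : 0 <= Nst g.
Proof.
case: (HD g) => Hub _.
have Hz : N (vscal 0 (fun _ => 0)) = 0 by rewrite N_scal Rabs_R0; ring.
have := Hub (inner g (vscal 0 (fun _ => 0))).
rewrite inner_scal_r Rmult_0_l; apply; exists (vscal 0 (fun _ => 0)); split; last by rewrite inner_scal_r Rmult_0_l.
rewrite Hz; lra.
Qed.

Lemma dual_bound g x : inner g x <= Nst g * N x.
Proof.
have Hg := Nst_ge0 g.
case: (Req_dec (N x) 0) => Hx.
  rewrite inner_zero_r; last exact: N_zero_vec.
  rewrite Hx; lra.
have Hp : 0 < N x by have := N_ge0 x; lra.
case: (HD g) => Hub _.
have H1 : inner g (vscal (/ N x) x) <= Nst g.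
  apply: Hub; exists (vscal (/ N x) x); split=> //.
  rewrite N_scal Rabs_pos_eq; last by left; apply: Rinv_0_lt_compat.
  rewrite Rinv_l //; lra.
rewrite inner_scal_r in H1.
apply (Rmult_le_reg_l (/ N x)); first by apply: Rinv_0_lt_compat.
have -> : / N x * (Nst g * N x) = Nst g by field.
exact: H1.
Qed.

Lemma Nst_sub g m : Nst (vsub g m) <= Nst g + Nst m.
Proof.
case: (HD (vsub g m)) => _ Hlub; apply: Hlub => r [x [Hx ->]].
rewrite inner_sub_l.
case: (HD g) => Hg _; case: (HD m) => Hm _.
have H1 : inner g x <= Nst g by apply: Hg; exists x; split.
have H2 : inner m (vscal (-1) x) <= Nst m.
  apply: Hm; exists (vscal (-1) x); split=> //.
  by rewrite N_scal Rabs_Ropp Rabs_R1 Rmult_1_l.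
rewrite inner_scal_r in H2; lra.
Qed.

End Norm.

Lemma lim0 X : (forall e, 0 < e -> 0 <= X + e) -> 0 <= X.
Proof.
move=> H; case: (Rle_lt_dec 0 X) => // Hx.
have := H (- X / 2); lra.
Qed.

Lemma mul_le_div x a b : 0 < b -> x <= a / b -> x * b <= a.
Proof.
move=> Hb H; apply (Rmult_le_reg_r (/ b)); first by apply: Rinv_0_lt_compat.
have -> : x * b * / b = x by field; lra.
have -> : a * / b = a / b by []. done.
Qed.

Section Breg.
Variables (d : nat) (N : vec d -> R) (K : vec d -> Prop) (Rg : vec d -> R) (gR : vec d -> vec d).
Hypothesis HN : is_norm N.
Hypothesis HK : convex_set K.
Hypothesis Hdiff : differentiable_on N K Rg gR.
Hypothesis Hsc : strongly_convex_on N K Rg.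

Lemma breg_sc a b : K a -> K b -> N (vsub a b) ^ 2 / 2 <= bregman Rg gR a b.
Proof.
move=> Ka Kb.
set n := N (vsub a b).
have Hn : 0 <= n by apply: (N_ge0 HN).
suff: 0 <= bregman Rg gR a b - n ^ 2 / 2 by lra.
apply: lim0 => e He.
set eps := e / (2 * (n + 1)).
have Heps : 0 < eps by rewrite /eps; apply: Rdiv_lt_0_compat; lra.
have Heps2 : eps * (2 * (n + 1)) = e by rewrite /eps; field; lra.
case: (Hdiff Kb Heps) => del [Hdel Hd].
set s := Rmin 1 (Rmin (del / (2 * (n + 1))) (e / (n ^ 2 + 1))).
have Hs0 : 0 < s.
  rewrite /s; apply: Rmin_glb_lt; first lra.
  apply: Rmin_glb_lt; apply: Rdiv_lt_0_compat; nra.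
have Hs1 : s <= 1 by apply: Rmin_l.
have Hs2 : s * (2 * (n + 1)) <= del.
  apply: mul_le_div; first lra.
  rewrite /s; apply: Rle_trans (Rmin_r _ _) _; apply: Rmin_l.
have Hs3 : s * (n ^ 2 + 1) <= e.
  apply: mul_le_div; first nra.
  rewrite /s; apply: Rle_trans (Rmin_r _ _) _; apply: Rmin_r.
have Kc : K (comb s a b) by apply: HK => //; lra.
have HNc : N (vsub (comb s a b) b) = s * n by apply: (N_comb_sub HN); lra.
have Hlt : N (vsub (comb s a b) b) < del by rewrite HNc; nra.
have H1 := Hd _ Kc Hlt.
have Hin : inner (gR b) (vsub (comb s a b) b) = s * inner (gR b) (vsub a b).
  rewrite -inner_scal_r; apply: inner_ext => i //.
  rewrite /comb /vadd /vscal /vsub; ring.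
rewrite Hin HNc in H1.
have H2 := Hsc Ka Kb (conj (Rlt_le _ _ Hs0) Hs1).
fold n in H2.
have H3 := Rle_abs (- (Rg (comb s a b) - Rg b - s * inner (gR b) (vsub a b))).
rewrite Rabs_Ropp in H3.
have H4 : s * (Rg a - Rg b - inner (gR b) (vsub a b) - (1 - s) / 2 * n ^ 2 + eps * n) >= 0.
  nra.
have H5 : Rg a - Rg b - inner (gR b) (vsub a b) - (1 - s) / 2 * n ^ 2 + eps * n >= 0.
  case: (Rle_lt_dec 0 (Rg a - Rg b - inner (gR b) (vsub a b) - (1 - s) / 2 * n ^ 2 + eps * n)) => Hc; first lra.
  nra.
rewrite /bregman.
nra.
Qed.

End Breg.

Section TP.
Variables (d : nat) (N : vec d -> R) (K : vec d -> Prop) (Rg : vec d -> R) (gR : vec d -> vec d).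
Hypothesis HN : is_norm N.
Hypothesis HK : convex_set K.
Hypothesis Hdiff : differentiable_on N K Rg gR.

Lemma three_point aa c (Mv yp x v : vec d) :
  0 <= c -> K v ->
  is_minimizer K (fun u => aa * inner u Mv + c * bregman Rg gR u yp) x ->
  aa * inner x Mv + c * bregman Rg gR x yp + c * bregman Rg gR v x
  <= aa * inner v Mv + c * bregman Rg gR v yp.
Proof.
move=> Hc Kv [Kx Hmin].
set X := aa * (inner v Mv - inner x Mv) +
  c * (inner (gR x) v - inner (gR x) x - inner (gR yp) v + inner (gR yp) x).
suff HX : 0 <= X.
  rewrite /bregman !inner_sub_r; rewrite /X in HX; lra.
apply: lim0 => e He.
set n := N (vsub v x).
have Hn : 0 <= n by apply: (N_ge0 HN).
set eps := e / (c * n + 1).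
have Hcn : 0 <= c * n by nra.
have Heps : 0 < eps by rewrite /eps; apply: Rdiv_lt_0_compat; lra.
have Heps2 : eps * (c * n + 1) = e by rewrite /eps; field; lra.
case: (Hdiff Kx Heps) => del [Hdel Hd].
set s := Rmin 1 (del / (2 * (n + 1))).
have Hs0 : 0 < s.
  rewrite /s; apply: Rmin_glb_lt; first lra.
  apply: Rdiv_lt_0_compat; nra.
have Hs1 : s <= 1 by apply: Rmin_l.
have Hs2 : s * (2 * (n + 1)) <= del.
  apply: mul_le_div; first lra.
  rewrite /s; apply: Rmin_r.
have Kc : K (comb s v x) by apply: HK => //; lra.
have HNc : N (vsub (comb s v x) x) = s * n by apply: (N_comb_sub HN); lra.
have Hlt : N (vsub (comb s v x) x) < del by rewrite HNc; nra.
have H1 := Hd _ Kc Hlt.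
have Hin : inner (gR x) (vsub (comb s v x) x) = s * inner (gR x) v + (-s) * inner (gR x) x.
  rewrite -inner_linr; apply: inner_ext => i //.
  rewrite /comb /vadd /vscal /vsub; ring.
rewrite Hin HNc in H1.
have H3 := Rle_abs (Rg (comb s v x) - Rg x - (s * inner (gR x) v + - s * inner (gR x) x)).
have H2 := Hmin _ Kc.
rewrite /= /bregman !inner_sub_r inner_comb_l in H2.
have Hin2 : inner (gR yp) (comb s v x) = s * inner (gR yp) v + (1 - s) * inner (gR yp) x.
  rewrite -inner_linr; apply: inner_ext => i //.
rewrite Hin2 in H2.
have H4 : c * (Rg (comb s v x) - Rg x - (s * inner (gR x) v + - s * inner (gR x) x)) <= c * (eps * (s * n)).
  apply: Rmult_le_compat_l => //; lra.
have H5 : 0 <= s * (X + c * eps * n) by rewrite /X; nra.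
have H6 : 0 <= X + c * eps * n.
  case: (Rle_lt_dec 0 (X + c * eps * n)) => // Hneg; nra.
have H7 : c * eps * n <= e by nra.
lra.
Qed.

End TP.

Lemma step_real D Pm P a r b B0 B1 X :
  0 < D -> 1 <= Pm -> Pm <= P -> P ^ 2 = Pm ^ 2 + a ^ 2 -> 0 <= a -> 0 <= r ->
  0 <= B1 <= D ^ 2 -> r ^ 2 / 2 <= b <= D ^ 2 ->
  X <= Pm / (2 * D) * B0 - Pm / (2 * D) * B1 - Pm / (2 * D) * b + a * r ->
  X <= Pm / (2 * D) * B0 - P / (2 * D) * B1 + 3 * D * (P - Pm).
Proof.
move=> HD HPm HP HPa Ha Hr HB1 Hb HX.
set h := / (2 * D).
have Hh : 0 < h by apply: Rinv_0_lt_compat; lra.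
have HhD : h * D = 1 / 2 by rewrite /h; field; lra.
have E1 : Pm / (2 * D) = Pm * h by [].
have E2 : P / (2 * D) = P * h by [].
rewrite E1 E2; rewrite E1 in HX.
have Hi : (P - Pm) * h * B1 <= (P - Pm) * D / 2.
  have : (P - Pm) * h * B1 <= (P - Pm) * h * D ^ 2.
    apply: Rmult_le_compat_l; [apply: Rmult_le_pos; lra | lra].
  have -> : (P - Pm) * h * D ^ 2 = (P - Pm) * D * (h * D) by ring.
  rewrite HhD; lra.
have Hsq : D * a ^ 2 - a * P * r + h * P ^ 2 * r ^ 2 / 2 = h / 2 * (2 * D * a - P * r) ^ 2.
  rewrite /h; field; lra.
have Hsq2 : 0 <= h / 2 * (2 * D * a - P * r) ^ 2.
  apply: Rmult_le_pos; [lra | apply: pow2_ge_0].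
have Ha2 : a ^ 2 <= 2 * P * (P - Pm) by nra.
have Hii : P * (a * r - P * h * r ^ 2 / 2) <= P * (2 * D * (P - Pm)) by nra.
have Hiii : a * r - P * h * r ^ 2 / 2 <= 2 * D * (P - Pm).
  apply: (Rmult_le_reg_l P); lra.
have Hiv : (P - Pm) * h * (r ^ 2 / 2) <= (P - Pm) * D / 2.
  have : (P - Pm) * h * (r ^ 2 / 2) <= (P - Pm) * h * D ^ 2.
    apply: Rmult_le_compat_l; [apply: Rmult_le_pos; lra | lra].
  have -> : (P - Pm) * h * D ^ 2 = (P - Pm) * D * (h * D) by ring.
  rewrite HhD; lra.
have Hv : Pm * h * (r ^ 2 / 2) <= Pm * h * b.
  apply: Rmult_le_compat_l; [apply: Rmult_le_pos; lra | lra].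
nra.
Qed.

Lemma phi_real At Am al ft fp fu gx gp gu ax :
  At = Am + al -> 0 <= Am -> 0 <= al -> ax = At * gx - Am * gp ->
  ft + (gu - gx) <= fu -> Am * (ft + (gp - gx)) <= Am * fp ->
  At * (ft - fu) - Am * (fp - fu) <= ax - al * gu.
Proof.
move=> -> HAm Hal -> H1 H2.
have : al * (ft + (gu - gx)) <= al * fu by apply: Rmult_le_compat_l.
nra.
Qed.

Lemma A_S m : A m.+1 = A m + alpha m.+1.
Proof. by []. Qed.

Lemma A_closed t : A t = INR t * (INR t + 1) / 2.
Proof.
elim: t => [|m IH]; first by rewrite /A /=; field.
rewrite A_S IH /alpha S_INR; field.
Qed.

Lemma A_pos t : (1 <= t)%N -> 0 < A t.
Proof.
move=> Ht; rewrite A_closed.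
have : 1 <= INR t by apply: (le_INR 1); lia.
nra.
Qed.

Lemma alpha_ge0 t : 0 <= alpha t.
Proof. exact: pos_INR. Qed.

Lemma sum1_ge0 (F : nat -> R) (n : nat) : (forall t, 0 <= F t) -> 0 <= sum1 F n.
Proof. move=> H; elim: n => [|n IH] /=; [lra | have := H n.+1; lra]. Qed.

Lemma sum1_le (F : nat -> R) (C : R) (n : nat) : (forall t : nat, (1 <= t <= n)%N -> F t <= C) -> sum1 F n <= INR n * C.
Proof.
elim: n => [|n IH] H; first by rewrite /=; lra.
change (sum1 F n + F n.+1 <= INR n.+1 * C).
rewrite S_INR.
have H1 : F n.+1 <= C by apply: H; lia.
have H2 : sum1 F n <= INR n * C by apply: IH => t Ht; apply: H; lia.
lra.
Qed.

Lemma le_div_r x a b : 0 < b -> x * b <= a -> x <= a / b.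
Proof.
move=> Hb H; apply (Rmult_le_reg_r b) => //.
have -> : a / b * b = a by field; lra.
done.
Qed.

Lemma div_ge0 a b : 0 <= a -> 0 < b -> 0 <= a / b.
Proof. move=> Ha Hb; apply: Rmult_le_pos => //; left; exact: Rinv_0_lt_compat. Qed.

Lemma A1 : A 1 = 1.
Proof. rewrite /A /= /alpha /=; ring. Qed.
Lemma alpha1 : alpha 1 = 1.
Proof. by rewrite /alpha /=. Qed.
Lemma A0 : A 0 = 0.
Proof. by []. Qed.

Lemma comb_coef_ok m : (1 <= m)%N -> 0 <= alpha m.+1 / A m.+1 <= 1.
Proof.
move=> Hm.
have HA : 0 < A m by apply: A_pos.
have HA' : 0 < A m.+1 by apply: A_pos.
have Ha := alpha_ge0 m.+1.
have E : alpha m.+1 / A m.+1 = 1 - A m / A m.+1 by rewrite A_S; field; rewrite -A_S; lra.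
split; first by apply: div_ge0.
rewrite E; have : 0 <= A m / A m.+1 by apply: div_ge0; lra.
lra.
Qed.

Theorem theorem1 (d : nat) (N Nst : vec d -> R) (K : vec d -> Prop)
  (f : vec d -> R) (oracle : vec d -> vec d) (G : R)
  (Rg : vec d -> R) (gR : vec d -> vec d) (D : R) (T : nat) (y0 : vec d)
  (x y ztil xbar M g : nat -> vec d) (eta : nat -> R) :
  is_norm N -> is_dual_norm N Nst ->
  compact_set K -> convex_set K ->
  differentiable_on N K Rg gR -> strongly_convex_on N K Rg ->
  is_bregman_diameter K Rg gR D ->
  convex_on K f ->
  (forall u, K u -> is_subgradient K f u (oracle u) /\ Nst (oracle u) <= G) ->
  (1 <= T)%N -> K y0 ->
  unixgrad_run Nst K Rg gR D oracle T y0 x y ztil xbar M g eta ->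
  (forall u, K u ->
     f (xbar T) - f u <=
     (7 * D * sqrt (1 + sum1 (fun t => alpha t ^ 2 * (Nst (vsub (g t) (M t))) ^ 2) T) - D)
       / (INR T) ^ 2) /\
  (7 * D * sqrt (1 + sum1 (fun t => alpha t ^ 2 * (Nst (vsub (g t) (M t))) ^ 2) T) - D)
       / (INR T) ^ 2
  <= 6 * D / (INR T) ^ 2 + 14 * G * D / sqrt (INR T).
Proof.
move=> HN HDn Hcomp HK Hdiff Hsc HBD Hf Hor HT Ky0 [Hy0 Hrun].
case: HBD => HD0 [HBub _].
have Bub : forall a b, K a -> K b -> bregman Rg gR a b <= D ^ 2.
  move=> a b Ka Kb; apply: HBub; exists a, b; split=> //; split=> //.
have Bsc : forall a b, K a -> K b -> N (vsub a b) ^ 2 / 2 <= bregman Rg gR a b.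
  move=> a b Ka Kb; exact: (breg_sc HN HK Hdiff Hsc Ka Kb).
have Bge0 : forall a b, K a -> K b -> 0 <= bregman Rg gR a b.
  move=> a b Ka Kb; have := Bsc a b Ka Kb; have := pow2_ge_0 (N (vsub a b)); lra.
have KX : forall t, (1 <= t <= T)%N -> K (x t).
  move=> t Ht; case: (Hrun t Ht) => _ [_ [_ [[Kx _] _]]]; exact: Kx.
have KY : forall t, (t <= T)%N -> K (y t).
  case=> [|t] Ht; first by rewrite Hy0.
  have Ht' : (1 <= t.+1 <= T)%N by lia.
  by case: (Hrun _ Ht') => _ [_ [_ [_ [_ [_ [Ky _]]]]]].
have Sxb : forall t, (t <= T)%N -> forall k, A t * xbar t k = sum1 (fun i => alpha i * x i k) t.
  case=> [|t] Ht k; first by rewrite A0 /=; ring.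
  have Ht' : (1 <= t.+1 <= T)%N by lia.
  case: (Hrun _ Ht') => _ [_ [_ [_ [Hxb _]]]].
  have HA : 0 < A t.+1 by apply: A_pos.
  rewrite Hxb; field; lra.
have KXB : forall t, (1 <= t <= T)%N -> K (xbar t).
  elim=> [|t IH] Ht; first by lia.
  case: (boolP (t == 0)%N) => Ht0.
    move/eqP: Ht0 => Ht0; subst t.
    have -> : xbar 1%N = x 1%N.
      apply: functional_extensionality => k.
      have := Sxb 1%N ltac:(lia) k; rewrite A1 /= /alpha /=; lra.
    exact: KX.
  have Ht1 : (1 <= t)%N by lia.
  have -> : xbar t.+1 = comb (alpha t.+1 / A t.+1) (x t.+1) (xbar t).
    apply: functional_extensionality => k.
    have E1 := Sxb t.+1 ltac:(lia) k.
    have E2 := Sxb t ltac:(lia) k.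
    change (A t.+1 * xbar t.+1 k = sum1 (fun i => alpha i * x i k) t + alpha t.+1 * x t.+1 k) in E1.
    rewrite -E2 in E1.
    have HA : 0 < A t by apply: A_pos.
    have HA' : 0 < A t.+1 by apply: A_pos.
    rewrite /comb /vadd /vscal.
    apply: (Rmult_eq_reg_l (A t.+1)); last lra.
    rewrite E1 A_S; field; rewrite -A_S; lra.
  apply: HK; [apply: KX; lia | apply: IH; lia | exact: comb_coef_ok].
have KZ : forall t, (1 <= t <= T)%N -> K (ztil t).
  case=> [|t] Ht; first by lia.
  case: (Hrun _ Ht) => Hz _.
  have Em : (t.+1 - 1)%N = t by lia.
  rewrite Em in Hz.
  case: (boolP (t == 0)%N) => Ht0.
    move/eqP: Ht0 => Ht0; subst t.
    have -> : ztil 1%N = y 0%N.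
      apply: functional_extensionality => k.
      rewrite Hz A1 /= /alpha /=; field.
    by rewrite Hy0.
  have Ht1 : (1 <= t)%N by lia.
  have -> : ztil t.+1 = comb (alpha t.+1 / A t.+1) (y t) (xbar t).
    apply: functional_extensionality => k.
    have E2 := Sxb t ltac:(lia) k.
    have HA : 0 < A t by apply: A_pos.
    have HA' : 0 < A t.+1 by apply: A_pos.
    rewrite Hz -E2 /comb /vadd /vscal A_S; field; rewrite -A_S; lra.
  apply: HK; [apply: KY; lia | apply: KXB; lia | exact: comb_coef_ok].
have HG : 0 <= G.
  case: (Hor _ Ky0) => _ H; have := Nst_ge0 HN HDn (oracle y0); lra.
have Hdel : forall t, (1 <= t <= T)%N -> Nst (vsub (g t) (M t)) <= 2 * G.
  move=> t Ht; case: (Hrun t Ht) => _ [HM [_ [_ [_ [Hg _]]]]].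
  rewrite HM Hg.
  case: (Hor _ (KXB t Ht)) => _ H1; case: (Hor _ (KZ t Ht)) => _ H2.
  have := Nst_sub HN HDn (oracle (xbar t)) (oracle (ztil t)); lra.
set S := fun k => sum1 (fun t => alpha t ^ 2 * Nst (vsub (g t) (M t)) ^ 2) k.
set P := fun k => sqrt (1 + S k).
have S_ge0 : forall k, 0 <= S k.
  move=> k; apply: sum1_ge0 => t; apply: Rmult_le_pos; apply: pow2_ge_0.
have P_ge1 : forall k, 1 <= P k.
  move=> k; rewrite /P -{1}sqrt_1; apply: sqrt_le_1_alt; have := S_ge0 k; lra.
have P_sq : forall k, P k ^ 2 = 1 + S k.
  move=> k; rewrite /P pow2_sqrt //; have := S_ge0 k; lra.
have Fold : sqrt (1 + sum1 (fun t => alpha t ^ 2 * Nst (vsub (g t) (M t)) ^ 2) T) = P T by [].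
rewrite Fold.
have PT1 := P_ge1 T.
have HT0 : 1 <= INR T by apply: (le_INR 1); lia.
split.
  move=> u Ku.
  set W := fun k => A k * (f (xbar k) - f u) + P k / (2 * D) * bregman Rg gR u (y k) - 3 * D * P k.
  have Wstep : forall m, (m.+1 <= T)%N -> W m.+1 <= W m.
    move=> m Hm.
    have Hm' : (1 <= m.+1 <= T)%N by lia.
    case: (Hrun _ Hm') => Hz [HM [Heta [[Kx Hmx] [Hxb [Hg [Ky Hmy]]]]]].
    have Em : (m.+1 - 1)%N = m by lia.
    rewrite Em in Heta Hmx Hmy.
    have Kym : K (y m) by apply: KY; lia.
    have Pm1 := P_ge1 m.
    have Hc : / eta m.+1 = P m / (2 * D).
      rewrite Heta; rewrite -/(S m) -/(P m); field; lra.
    have Hc0 : 0 <= / eta m.+1 by rewrite Hc; apply: div_ge0; lra.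
    have TPy := three_point HN HK Hdiff Hc0 Ku (conj Ky Hmy).
    have TPx := three_point HN HK Hdiff Hc0 Ky (conj Kx Hmx).
    rewrite Hc in TPy TPx.
    set del := Nst (vsub (g m.+1) (M m.+1)).
    set r := N (vsub (x m.+1) (y m.+1)).
    have Hdel0 : 0 <= del by apply: (Nst_ge0 HN HDn).
    have Hr0 : 0 <= r by apply: (N_ge0 HN).
    have Ha0 := alpha_ge0 m.+1.
    have Hdual : alpha m.+1 * (inner (x m.+1) (g m.+1) - inner (y m.+1) (g m.+1)
        - inner (x m.+1) (M m.+1) + inner (y m.+1) (M m.+1)) <= alpha m.+1 * del * r.
      have E : inner (x m.+1) (g m.+1) - inner (y m.+1) (g m.+1)
        - inner (x m.+1) (M m.+1) + inner (y m.+1) (M m.+1)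
        = inner (vsub (g m.+1) (M m.+1)) (vsub (x m.+1) (y m.+1)).
        rewrite inner_sub_l !inner_sub_r !(inner_comm (x m.+1)) !(inner_comm (y m.+1)); ring.
      rewrite E Rmult_assoc; apply: Rmult_le_compat_l => //.
      exact: (dual_bound HN HDn).
    have Hb1 : r ^ 2 / 2 <= bregman Rg gR (y m.+1) (x m.+1).
      rewrite /r (N_sym HN); exact: Bsc.
    have Hb2 := Bub _ _ Ky Kx.
    have Hb3 := Bge0 _ _ Kx Kym.
    have HB1a := Bge0 _ _ Ku Ky.
    have HB1b := Bub _ _ Ku Ky.
    have HPm : P m <= P m.+1.
      rewrite /P; apply: sqrt_le_1_alt.
      change (1 + S m <= 1 + (S m + alpha m.+1 ^ 2 * del ^ 2)).
      have : 0 <= alpha m.+1 ^ 2 * del ^ 2 by apply: Rmult_le_pos; apply: pow2_ge_0.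
      lra.
    have HPsq : P m.+1 ^ 2 = P m ^ 2 + (alpha m.+1 * del) ^ 2.
      rewrite !P_sq.
      change (1 + (S m + alpha m.+1 ^ 2 * del ^ 2) = 1 + S m + (alpha m.+1 * del) ^ 2); ring.
    have Hstep := @step_real D (P m) (P m.+1) (alpha m.+1 * del) r
      (bregman Rg gR (y m.+1) (x m.+1)) (bregman Rg gR u (y m)) (bregman Rg gR u (y m.+1))
      (alpha m.+1 * (inner (x m.+1) (g m.+1) - inner u (g m.+1))) HD0 Pm1 HPm HPsq
      ltac:(apply: Rmult_le_pos; lra) Hr0 (conj HB1a HB1b) (conj Hb1 Hb2).
    have Hreg : alpha m.+1 * (inner (x m.+1) (g m.+1) - inner u (g m.+1)) <=
      P m / (2 * D) * bregman Rg gR u (y m) - P m.+1 / (2 * D) * bregman Rg gR u (y m.+1)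
      + 3 * D * (P m.+1 - P m).
      apply: Hstep.
      have : 0 <= P m / (2 * D) * bregman Rg gR (x m.+1) (y m).
        apply: Rmult_le_pos => //; apply: div_ge0; lra.
      lra.
    (* online-to-batch step *)
    have Kxb := KXB _ Hm'.
    have HA' : A m.+1 = A m + alpha m.+1 := A_S m.
    have HAm : 0 <= A m by rewrite A_closed; have := pos_INR m; nra.
    have Hax : alpha m.+1 * inner (g m.+1) (x m.+1)
      = A m.+1 * inner (g m.+1) (xbar m.+1) - A m * inner (g m.+1) (xbar m).
      have -> : A m.+1 * inner (g m.+1) (xbar m.+1) - A m * inner (g m.+1) (xbar m)
        = A m.+1 * inner (g m.+1) (xbar m.+1) + (- A m) * inner (g m.+1) (xbar m) by ring.
      rewrite -inner_linr -inner_scal_r; apply: inner_ext => k //.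
      have E1 := Sxb m.+1 ltac:(lia) k.
      have E2 := Sxb m ltac:(lia) k.
      change (A m.+1 * xbar m.+1 k = sum1 (fun i => alpha i * x i k) m + alpha m.+1 * x m.+1 k) in E1.
      rewrite /vscal; lra.
    case: (Hor _ Kxb) => Hsg _.
    rewrite -Hg in Hsg.
    have H1 := Hsg _ Ku; rewrite inner_sub_r in H1.
    have H2 : A m * (f (xbar m.+1) + (inner (g m.+1) (xbar m) - inner (g m.+1) (xbar m.+1)))
        <= A m * f (xbar m).
      case: (boolP (m == 0)%N) => Hm0.
        move/eqP: Hm0 => ->; rewrite A0; lra.
      have Kxbm : K (xbar m) by apply: KXB; lia.
      have := Hsg _ Kxbm; rewrite inner_sub_r => H.
      apply: Rmult_le_compat_l => //.
    have Hphi := phi_real HA' HAm Ha0 Hax H1 H2.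
    rewrite !(inner_comm (g m.+1)) in Hphi.
    rewrite /W; lra.
  have Wall : forall m, (m <= T)%N -> W m <= W 0%N.
    elim=> [|m IH] Hm; first lra.
    have := Wstep m Hm; have := IH ltac:(lia); lra.
  have W0 : W 0%N <= D / 2 - 3 * D.
    have HP0 : P 0%N = 1 by rewrite /P /S /= Rplus_0_r sqrt_1.
    have HB := Bub _ _ Ku (KY 0%N ltac:(lia)).
    rewrite /W HP0 A0.
    have : 1 / (2 * D) * bregman Rg gR u (y 0%N) <= 1 / (2 * D) * D ^ 2.
      apply: Rmult_le_compat_l => //; apply: div_ge0; lra.
    have -> : 1 / (2 * D) * D ^ 2 = D / 2 by field; lra.
    lra.
  have HWT := Wall T (leqnn T).
  have HBT : 0 <= P T / (2 * D) * bregman Rg gR u (y T).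
    apply: Rmult_le_pos; [apply: div_ge0; lra | apply: Bge0 => //; apply: KY; lia].
  have HPhi : A T * (f (xbar T) - f u) <= 3 * D * P T - 5 / 2 * D .
    have E : W T = A T * (f (xbar T) - f u) + P T / (2 * D) * bregman Rg gR u (y T) - 3 * D * P T by [].
    lra.
  have HT2 : 0 < INR T ^ 2 by apply: pow_lt; lra.
  apply: le_div_r => //.
  case: (Rle_lt_dec (f (xbar T) - f u) 0) => Hs.
    have : (f (xbar T) - f u) * INR T ^ 2 <= 0 by nra.
    nra.
  have HAT : INR T ^ 2 <= 2 * A T by rewrite A_closed; nra.
  nra.
have HST : S T <= INR T * (INR T ^ 2 * (2 * G) ^ 2).
  apply: sum1_le => t Ht.
  have Hd0 := Nst_ge0 HN HDn (vsub (g t) (M t)).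
  have Hd1 := Hdel t Ht.
  have Ha0 := alpha_ge0 t.
  have Ha1 : alpha t <= INR T by apply: le_INR; lia.
  have H1 : alpha t * Nst (vsub (g t) (M t)) <= INR T * (2 * G) by apply: Rmult_le_compat.
  have H2 : (alpha t * Nst (vsub (g t) (M t))) ^ 2 <= (INR T * (2 * G)) ^ 2.
    apply: pow_incr; split=> //; exact: Rmult_le_pos.
  have -> : alpha t ^ 2 * Nst (vsub (g t) (M t)) ^ 2 = (alpha t * Nst (vsub (g t) (M t))) ^ 2 by ring.
  have -> : INR T ^ 2 * (2 * G) ^ 2 = (INR T * (2 * G)) ^ 2 by ring.
  exact: H2.
set q := sqrt (INR T).
have Hq0 : 0 < q by apply: sqrt_lt_R0; lra.
have Hq2 : INR T = q ^ 2 by rewrite /q pow2_sqrt //; lra.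
set x0 := 2 * G * INR T * q.
have Hx0 : 0 <= x0 by rewrite /x0; apply: Rmult_le_pos; [apply: Rmult_le_pos|]; lra.
have Hx02 : S T <= x0 ^ 2.
  have -> : x0 ^ 2 = INR T * (INR T ^ 2 * (2 * G) ^ 2).
    rewrite /x0; have -> : (2 * G * INR T * q) ^ 2 = (2 * G * INR T) ^ 2 * q ^ 2 by ring.
    rewrite -Hq2; ring.
  exact: HST.
have HP : P T <= 1 + x0.
  have := P_sq T; have := P_ge1 T; nra.
have Hnum : 7 * D * P T - D <= 6 * D + 14 * G * D * q ^ 3.
  have -> : 14 * G * D * q ^ 3 = 7 * D * x0 by rewrite /x0 Hq2; ring.
  nra.
rewrite Hq2.
have Hq4 : 0 < (q ^ 2) ^ 2 by apply: pow_lt; apply: pow_lt.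
have -> : 6 * D / (q ^ 2) ^ 2 + 14 * G * D / q = (6 * D + 14 * G * D * q ^ 3) / (q ^ 2) ^ 2.
  field; lra.
rewrite /Rdiv; apply: Rmult_le_compat_r; last exact: Hnum.
left; exact: Rinv_0_lt_compat.
Qed.
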